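(* Assume (A1) and (A2) at time $k$, let $\phi$ satisfy (A3) at time $k$, and suppose that for a constant $\widetilde C_{k|k-1}$ independent of $N$, $\mathbb{E}|\langle\widetilde\pi^N_{k|k-1},\beta_k\rangle-\langle\pi_{k|k-1},\beta_k\rangle|^4\le\widetilde C_{k|k-1}\|\beta_k\|_\infty^4/N^2$ and $\mathbb{E}|\langle\widetilde\pi^N_{k|k-1},\beta_k\phi\rangle-\langle\pi_{k|k-1},\beta_k\phi\rangle|^4\le\widetilde C_{k|k-1}\|\beta_k\|_\infty^4\|\phi\|^4_{k-1,4}/N^2$. Then $$\mathbb{E}\big|\langle\widetilde\pi^N_{k|k},\phi\rangle-\langle\pi_{k|k},\phi\rangle\big|^4\le\widetilde C_{k|k}\frac{\|\phi\|^4_{k-1,4}}{N^2},\qquad \widetilde C_{k|k}^{1/4}=\frac{\widetilde C_{k|k-1}^{1/4}\|\beta_k\|_\infty}{\gamma_k\langle\pi_{k|k-1},\beta_k\rangle}\big(\|\beta_k\phi\|_\infty+\gamma_k\big).$$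
   Context: Notation: for a measure $\nu$ and function $\phi$, $\langle\nu,\phi\rangle=\int\phi\,d\nu$; $\|f\|_\infty$ is the supremum norm. Fixed data: integer $k\ge1$; deterministic vectors $\mathbf{x}_0,\dots,\mathbf{x}_k\in\mathbb{R}^{n_x}$ (defender's true states) and $\mathbf{a}_1,\dots,\mathbf{a}_k\in\mathbb{R}^{n_a}$ (defender's observations); a conditional density $\rho(\mathbf{y}|\mathbf{x})$ in $\mathbf{y}\in\mathbb{R}^{n_y}$; a conditional density $\beta(\mathbf{a}|\hat{\mathbf{x}})$ in $\mathbf{a}\in\mathbb{R}^{n_a}$, $\hat{\mathbf{x}}\in\mathbb{R}^{n_x}$; measurable maps $T_s:\mathbb{R}^{n_x}\times\mathbb{R}^{n_y}\to\mathbb{R}^{n_x}$, $s=1,\dots,k$ (the attacker's forward-filter update $\hat{\mathbf{x}}_s=T_s(\hat{\mathbf{x}}_{s-1},\mathbf{y}_s)$). Write $\beta_s(\hat{\mathbf{x}},\mathbf{y})=\beta(\mathbf{a}_s|\hat{\mathbf{x}})$ and, for a function $\psi$ of $(\hat{\mathbf{x}},\mathbf{y})$, $(\delta_T\rho\psi)_s(\hat{\mathbf{x}}',\mathbf{y}')=\int\psi(T_s(\hat{\mathbf{x}}',\mathbf{y}),\mathbf{y})\rho(\mathbf{y}|\mathbf{x}_s)\,d\mathbf{y}$ (abbreviated $\delta_T\rho\psi$). Optimal inverse filter: probability measures on $\mathbb{R}^{n_x}\times\mathbb{R}^{n_y}$ defined from $\pi_{0|0}=\pi_0$ by $\langle\pi_{s|s-1},\psi\rangle=\langle\pi_{s-1|s-1},\delta_T\rho\psi\rangle$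 and $\langle\pi_{s|s},\psi\rangle=\langle\pi_{s|s-1},\beta_s\psi\rangle/\langle\pi_{s|s-1},\beta_s\rangle$. I-PF with $N$ particles and thresholds $\gamma_s>0$: draw $\hat{\mathbf{x}}^i_0$ i.i.d. from a given distribution $\widetilde\pi^x_0$ and, independently, $\mathbf{y}^i_0$ i.i.d. from $\rho(\cdot|\mathbf{x}_0)$, $i=1,\dots,N$; $\pi_0$ is the (product) law of $(\hat{\mathbf{x}}^i_0,\mathbf{y}^i_0)$ and $\pi^N_{0|0}=\frac1N\sum_i\delta_{(\hat{\mathbf{x}}^i_0,\mathbf{y}^i_0)}$. For $s\ge1$, given particles $(\hat{\mathbf{x}}^i_{s-1},\mathbf{y}^i_{s-1})$: (1) draw conditionally i.i.d. $\bar{\mathbf{y}}^i_s\sim\rho(\cdot|\mathbf{x}_s)$ and set $\bar{\hat{\mathbf{x}}}^i_s=T_s(\hat{\mathbf{x}}^i_{s-1},\bar{\mathbf{y}}^i_s)$; (2) if $\frac1N\sum_i\beta(\mathbf{a}_s|\bar{\hat{\mathbf{x}}}^i_s)\ge\gamma_s$, accept and set $(\tilde{\hat{\mathbf{x}}}^i_s,\tilde{\mathbf{y}}^i_s)=(\bar{\hat{\mathbf{x}}}^i_s,\bar{\mathbf{y}}^i_s)$; otherwise redo (1) independently; (3) set $\widetilde\pi^N_{s|s-1}=\frac1N\sum_i\delta_{(\tilde{\hat{\mathbf{x}}}^i_s,\tilde{\mathbf{y}}^i_s)}$, weights $\omega^i_s=\beta(\mathbf{a}_s|\tilde{\hat{\mathbf{x}}}^i_s)/\sum_j\beta(\mathbf{a}_s|\tilde{\hat{\mathbf{x}}}^j_s)$,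 $\widetilde\pi^N_{s|s}=\sum_i\omega^i_s\delta_{(\tilde{\hat{\mathbf{x}}}^i_s,\tilde{\mathbf{y}}^i_s)}$; (4) draw $N$ conditionally i.i.d. $(\hat{\mathbf{x}}^i_s,\mathbf{y}^i_s)\sim\widetilde\pi^N_{s|s}$ and set $\pi^N_{s|s}=\frac1N\sum_i\delta_{(\hat{\mathbf{x}}^i_s,\mathbf{y}^i_s)}$. Expectations $\mathbb{E}$ are over the particle randomness. Norm: $\|\phi\|_{s,4}=\max\{1,\max_{0\le r\le s}\langle\pi_{r|r},|\phi|^4\rangle^{1/4}\}$. Assumptions: (A1) for $s=1,\dots,k$, $\langle\pi_{s|s-1},\beta_s\rangle>0$ and $0<\gamma_s<\langle\pi_{s|s-1},\beta_s\rangle$. (A2) $\beta(\mathbf{a}_s|\cdot)$ and $\rho(\cdot|\mathbf{x}_s)$ are bounded for $s=1,\dots,k$. (A3) for $s=1,\dots,k$, $\sup_{(\hat{\mathbf{x}},\mathbf{y})}|\phi(\hat{\mathbf{x}},\mathbf{y})|^4\beta(\mathbf{a}_s|\hat{\mathbf{x}})<\infty$. By construction (step (2)), $\langle\widetilde\pi^N_{k|k-1},\beta_k\rangle\ge\gamma_k$. *)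

(* Defs.v *)
From HB Require Import structures.
From mathcomp Require Import all_boot all_order all_algebra.
From mathcomp Require Import all_classical all_reals all_analysis.
Set Implicit Arguments. Unset Strict Implicit. Unset Printing Implicit Defensive.
Import Order.TTheory GRing.Theory Num.Theory.
Local Open Scope ring_scope.
Local Open Scope classical_set_scope.

Definition pair d (T : measurableType d) (R : realType)
  (nu : set T -> \bar R) (f : T -> R) : R :=
  fine (\int[nu]_x (f x)%:E)%E.

Definition supnorm (T : Type) (R : realType) (f : T -> R) : R :=
  sup [set `|f x| | x in [set: T]].

(* The fourth power of the norm ||phi||_{s,4}:
   ||phi||_{s,4}^4 = max{1, max_{0<=r<=s} <pi_{r|r}, |phi|^4>}  (extended real,
   since <pi_{r|r}, |phi|^4> may be infinite). [k-1] is encoded by ranging r < k. *)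
Definition norm4_pow4 d (T : measurableType d) (R : realType)
  (pif : nat -> probability T R) (k : nat) (phi : T -> R) : \bar R :=
  Order.max 1%E (\big[Order.max/-oo%E]_(r < k) (\int[pif r]_x ((`|phi x| ^+ 4)%:E))%E).

Definition emp_pair (T : Type) (R : realType) (N : nat)
  (X : 'I_N -> T) (psi : T -> R) : R :=
  (N%:R)^-1 * \sum_(i < N) psi (X i).

Definition wemp_pair (T : Type) (R : realType) (N : nat)
  (X : 'I_N -> T) (b : T -> R) (psi : T -> R) : R :=
  \sum_(i < N) (b (X i) / \sum_(j < N) b (X j)) * psi (X i).

(* Main.v *)
Require Import Defs.
From HB Require Import structures.
From mathcomp Require Import all_boot all_order all_algebra.
From mathcomp Require Import all_classical all_reals all_analysis.
From mathcomp Require Import measurable_realfun.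
From mathcomp.algebra_tactics Require Import ring lra.
Import Order.TTheory GRing.Theory Num.Theory.
Local Open Scope ring_scope.
Local Open Scope classical_set_scope.
Import HBNNSimple.

Lemma int_mono d (T : measurableType d) (R : realType) (mu : {measure set T -> \bar R})
  (f g : T -> \bar R) : (forall x, (0 <= f x)%E) -> (forall x, (f x <= g x)%E) ->
  (\int[mu]_x f x <= \int[mu]_x g x)%E.
Proof.
move=> f0 fg.
have g0 x : (0 <= g x)%E by apply: le_trans (f0 x) (fg x).
rewrite !ge0_integralTE //; apply: ereal_sup_le => _ [h hf <-]; exists h => //= x.
exact: le_trans (hf x) (fg x).
Qed.

Lemma cov_ge0 d (T : measurableType d) (R : realType)
  (nu mu : {measure set T -> \bar R}) (G : T -> R)
  (G0 : forall x, 0 <= G x) (mG : measurable_fun setT G)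
  (nuG : forall A, measurable A -> nu A = (\int[mu]_(x in A) (G x)%:E)%E)
  (f : T -> \bar R) (E : set T) : (forall x, (0 <= f x)%E) ->
    measurable E -> measurable_fun E f ->
  (\int[mu]_(x in E) (f x * (G x)%:E) = \int[nu]_(x in E) f x)%E.
Proof.
move=> f0 mE mf; set g := fun x => (G x)%:E.
have mg : measurable_fun setT g by exact/measurable_EFinP.
have g0 x : (0 <= g x)%E by rewrite lee_fin.
pose h := nnsfun_approx mE mf.
have -> : (\int[nu]_(x in E) f x =
    lim (\int[nu]_(x in E) (EFin \o h n) x @[n --> \oo]))%E.
  have fE x : E x -> f x = lim ((EFin \o h n) x @[n --> \oo]).
    by move=> Ex; apply/esym/cvg_lim => //; exact: cvg_nnsfun_approx.
  under eq_integral => x /[!inE] /fE -> //.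
  apply: monotone_convergence => //.
  - move=> n; apply/measurable_EFinP.
    by apply: (measurable_funS measurableT) => //; exact/measurable_funP.
  - by move=> n x Ex //=; rewrite lee_fin.
  - by move=> x Ex a b ab; rewrite lee_fin; exact/lefP/nd_nnsfun_approx.
have -> : (\int[mu]_(x in E) (f \* g) x =
    lim (\int[mu]_(x in E) ((EFin \o h n) \* g) x @[n --> \oo]))%E.
  have fg x : E x -> (f x * g x = lim (((EFin \o h n) \* g) x @[n --> \oo]))%E.
    by move=> Ex; apply/esym/cvg_lim => //; apply: cvgeZr;
      [by []|exact: cvg_nnsfun_approx].
  under eq_integral => x /[!inE] /fg -> //.
  apply: monotone_convergence => [//| | |].
  - move=> n; apply/emeasurable_funM; apply/measurable_funTS => //.
    exact/measurable_EFinP.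
  - by move=> n x Ex /=; rewrite mule_ge0 ?lee_fin.
  - by move=> x Ex a b ab/=; rewrite lee_wpmul2r ?lee_fin//; exact/lefP/nd_nnsfun_approx.
suff suf n : (\int[mu]_(x in E) ((EFin \o h n) x * g x) =
    \int[nu]_(x in E) (EFin \o h n) x)%E.
  by under eq_fun do rewrite suf.
transitivity (\int[nu]_(x in E)
   (\sum_(y \in range (h n)) (y * \1_(h n @^-1` [set y]) x)%:E))%E; last first.
  by apply: eq_integral => t tE; rewrite /= fimfunE -fsumEFin.
have indich m r : measurable_fun E (fun x => (r * \1_(h m @^-1` [set r]) x)%:E).
  by apply: (measurable_comp measurableT) => //; exact: measurable_funM.
rewrite ge0_integral_fsum//; last by move=> m y Ey; exact: nnfun_muleindic_ge0.
transitivity (\int[mu]_(x in E) (\sum_(y \in range (h n))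
    (y * \1_(h n @^-1` [set y]) x)%:E * g x))%E.
  under [RHS]eq_integral => x xE.
    rewrite -ge0_mule_fsuml => [|y]; last exact: nnfun_muleindic_ge0.
    rewrite fsumEFin // -(fimfunE _ x); over.
  by [].
rewrite ge0_integral_fsum//; last 2 first.
  - move=> y; apply: emeasurable_funM => //; apply: measurable_funTS.
    exact: mg.
  - by move=> m y Ey; rewrite mule_ge0 ?g0// nnfun_muleindic_ge0.
apply: eq_fsbigr => r rhn.
under [RHS]eq_integral do rewrite EFinM.
rewrite integralZl_indic_nnsfun => //.
under eq_integral do rewrite EFinM -muleA.
rewrite ge0_integralZl//.
- under eq_integral do rewrite muleC.
  rewrite (eq_integral (g \_ (h n @^-1` [set r]))); last first.
    by move=> x xE; rewrite epatch_indic.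
  by rewrite -integral_mkcondr -nuG// integral_indic// setIC.
- apply: emeasurable_funM; first exact/measurable_EFinP.
  exact/measurable_funTS/mg.
- by move=> t Et; rewrite mule_ge0 ?lee_fin ?g0.
- by move: rhn; rewrite inE => -[t _ <-]; rewrite lee_fin.
Qed.

Lemma cov_real d (T : measurableType d) (R : realType)
  (nu mu : {measure set T -> \bar R}) (G : T -> R)
  (G0 : forall x, 0 <= G x) (mG : measurable_fun setT G)
  (nuG : forall A, measurable A -> nu A = (\int[mu]_(x in A) (G x)%:E)%E)
  (f : T -> R) : measurable_fun setT f ->
  (\int[nu]_x (f x)%:E = \int[mu]_x (f x * G x)%:E)%E.
Proof.
move=> mf.
have mfE : measurable_fun setT (fun x => (f x)%:E) by exact/measurable_EFinP.
have ep : (fun x => (f x * G x)%:E)^\+%E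
    = (fun x => ((fun x => (f x)%:E)^\+ x * (G x)%:E)%E).
  apply/funext => x; rewrite !funeposE EFinM muleC [RHS]muleC maxe_pMr ?lee_fin //.
  by rewrite mule0.
have en : (fun x => (f x * G x)%:E)^\-%E
    = (fun x => ((fun x => (f x)%:E)^\- x * (G x)%:E)%E).
  apply/funext => x; rewrite !funenegE EFinM muleC [RHS]muleC maxe_pMr ?lee_fin //.
  by rewrite mule0 muleN.
rewrite [LHS]integralE [RHS]integralE ep en.
rewrite (@cov_ge0 _ _ _ nu mu G G0 mG nuG) //; last exact: measurable_funepos.
rewrite (@cov_ge0 _ _ _ nu mu G G0 mG nuG) //; last exact: measurable_funeneg.
Qed.


Lemma cs2 (R : realFieldType) (g S U V : R) : 0 <= g -> 0 <= S ->
  (g * U + S * V) ^+ 2 <= (g + S) * (g * U ^+ 2 + S * V ^+ 2).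
Proof.
move=> g0 S0; rewrite -subr_ge0.
have -> : (g + S) * (g * U ^+ 2 + S * V ^+ 2) - (g * U + S * V) ^+ 2
  = g * S * (U - V) ^+ 2 by ring.
by apply: mulr_ge0; [apply: mulr_ge0|apply: sqr_ge0].
Qed.

Lemma pm4 (R : realFieldType) (g S U V : R) : 0 <= g -> 0 <= S ->
  (g * U + S * V) ^+ 4 <= (g + S) ^+ 3 * (g * U ^+ 4 + S * V ^+ 4).
Proof.
move=> g0 S0.
have e4 : forall x : R, x ^+ 4 = (x ^+ 2) ^+ 2 by move=> x; rewrite -exprM.
rewrite e4.
have h1 := @cs2 _ g S U V g0 S0.
have h2 := @cs2 _ g S (U ^+ 2) (V ^+ 2) g0 S0.
have gs : 0 <= g + S by rewrite addr_ge0.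
apply: (le_trans (y := ((g + S) * (g * U ^+ 2 + S * V ^+ 2)) ^+ 2)).
  rewrite ler_pXn2r // ?nnegrE ?sqr_ge0 //.
  by rewrite mulr_ge0 // addr_ge0 // mulr_ge0 // sqr_ge0.
rewrite exprMn.
have -> : (g + S) ^+ 3 = (g + S) ^+ 2 * (g + S) by rewrite exprSr.
rewrite -mulrA ler_wpM2l ?sqr_ge0 //.
by rewrite -!e4 in h2.
Qed.

Lemma key_ineq (R : realFieldType) (a b A B g S : R) : 0 < g -> 0 < B -> g <= b ->
  `|a| <= S ->
  `|a / b - A / B| ^+ 4 <= ((g * B)^-1) ^+ 4 * (g + S) ^+ 3 * g * `|a - A| ^+ 4
      + ((g * B)^-1) ^+ 4 * (g + S) ^+ 3 * S * `|b - B| ^+ 4.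
Proof.
move=> g0 B0 gb aS.
have b0 : 0 < b by apply: lt_le_trans gb.
have S0 : 0 <= S by apply: le_trans aS.
set U := `|a - A|; set V := `|b - B|.
have q : `|a / b| <= S / g.
  rewrite normrM normfV (gtr0_norm b0).
  rewrite ler_pdivrMr // mulrAC ler_pdivlMr //.
  by rewrite ler_pM // ltW.
have st1 : `|a / b - A / B| <= (g * B)^-1 * (g * U + S * V).
  have -> : a / b - A / B = ((a - A) + (a / b) * (B - b)) / B.
    by field; apply/andP; split; rewrite gt_eqF.
  rewrite normrM normfV (gtr0_norm B0).
  have -> : (g * B)^-1 * (g * U + S * V) = (U + S / g * V) / B.
    by field; apply/andP; split; rewrite gt_eqF.
  rewrite ler_pM2r ?invr_gt0 //.
  apply: le_trans (ler_normD _ _) _.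
  rewrite lerD2l normrM distrC.
  by rewrite ler_wpM2r.
apply: (le_trans (y := ((g * B)^-1 * (g * U + S * V)) ^+ 4)).
  have X0 : 0 <= (g * B)^-1 * (g * U + S * V).
    apply: mulr_ge0; first by rewrite invr_ge0 mulr_ge0 // ltW.
    have U0 : 0 <= U by apply: normr_ge0.
    have V0 : 0 <= V by apply: normr_ge0.
    have g0' := ltW g0.
    by apply: addr_ge0; apply: mulr_ge0.
  by rewrite ler_pXn2r // nnegrE.
rewrite exprMn.
have := @pm4 _ g S U V (ltW g0) S0.
set K := (g * B)^-1 ^+ 4.
have K0 : 0 <= K by rewrite exprn_ge0 // invr_ge0 mulr_ge0 // ltW.
move=> h.
have -> : K * (g + S) ^+ 3 * g * U ^+ 4 + K * (g + S) ^+ 3 * S * V ^+ 4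
  = K * ((g + S) ^+ 3 * (g * U ^+ 4 + S * V ^+ 4)) by ring.
by rewrite ler_wpM2l.
Qed.

Lemma int_cst_prob d (T : measurableType d) (R : realType) (P : probability T R)
  (c : R) : (\int[P]_x (cst c%:E) x = c%:E)%E.
Proof. by rewrite integral_cst //= probability_setT mule1. Qed.
Theorem claim1
  (R : realType)
  (* x-hat space and y space, with a reference measure mu on y-space *)
  (d1 d2 : measure_display)
  (Xh : measurableType d1) (Y : measurableType d2)
  (mu : {measure set Y -> \bar R})
  (* time horizon k >= 1 *)
  (k : nat) (k_ge1 : (1 <= k)%N)
  (* rho s = rho(. | x_s), beta s = beta(a_s | .), T s = attacker's update *)
  (rho : nat -> Y -> R) (beta : nat -> Xh -> R) (T : nat -> Xh -> Y -> Xh)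
  (rho_ge0 : forall s y, 0 <= rho s y)
  (beta_ge0 : forall s x, 0 <= beta s x)
  (beta_meas : forall s, measurable_fun [set: Xh] (beta s))
  (* optimal inverse filter: pif s = pi_{s|s}, pip s = pi_{s|s-1} *)
  (pif pip : nat -> probability (Xh * Y)%type R)
  (pred_step : forall s, (1 <= s <= k)%N -> forall A, measurable A ->
     (pip s A = \int[pif s.-1]_p \int[mu]_y
                 ((\1_A (T s p.1 y, y) : R) * rho s y)%:E)%E)
  (upd_step : forall s, (1 <= s <= k)%N -> forall A, measurable A ->
     (\int[pip s]_(p in A) (beta s p.1)%:E)%E
       = (pif s A * \int[pip s]_p (beta s p.1)%:E)%E)
  (* thresholds *)
  (gamma : nat -> R)
  (* (A1) at time k *)
  (A1a : 0 < pair (pip k) (fun p => beta k p.1))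
  (A1b : 0 < gamma k /\ gamma k < pair (pip k) (fun p => beta k p.1))
  (* (A2) at time k *)
  (A2b : exists M, forall x, beta k x <= M)
  (A2r : exists M, forall y, rho k y <= M)
  (* test function phi satisfying (A3) at time k *)
  (phi : Xh * Y -> R) (phi_meas : measurable_fun [set: Xh * Y] phi)
  (A3 : exists M, forall p, `|phi p| ^+ 4 * beta k p.1 <= M)
  (* particle randomness: probability space and the N accepted predicted
     particles (tilde x-hat^i_k, tilde y^i_k) of the I-PF at time k *)
  (dO : measure_display) (Omega : measurableType dO) (Pr : probability Omega R)
  (N : nat) (N_gt0 : (0 < N)%N)
  (Xt : 'I_N -> Omega -> Xh * Y)
  (Xt_meas : forall i, measurable_fun [set: Omega] (Xt i))
  (* by construction (acceptance step (2)) *)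
  (accept : forall w, gamma k <= emp_pair (fun i => Xt i w) (fun p => beta k p.1))
  (* the two fourth-moment hypotheses *)
  (Ct : R)
  (H1 : (\int[Pr]_w ((`| emp_pair (fun i => Xt i w) (fun p => beta k p.1)
                        - pair (pip k) (fun p => beta k p.1) | ^+ 4)%:E)
         <= (Ct * supnorm (beta k) ^+ 4 / (N%:R ^+ 2))%:E)%E)
  (H2 : (\int[Pr]_w ((`| emp_pair (fun i => Xt i w) (fun p => beta k p.1 * phi p)
                        - pair (pip k) (fun p => beta k p.1 * phi p) | ^+ 4)%:E)
         <= (Ct * supnorm (beta k) ^+ 4 / (N%:R ^+ 2))%:E
              * norm4_pow4 pif k phi)%E) :
  let Ckk := (Ct `^ (4%:R^-1) * supnorm (beta k)
               / (gamma k * pair (pip k) (fun p => beta k p.1))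
               * (supnorm (fun p => beta k p.1 * phi p) + gamma k)) ^+ 4 in
  (\int[Pr]_w ((`| wemp_pair (fun i => Xt i w) (fun p => beta k p.1) phi
                   - pair (pif k) phi | ^+ 4)%:E)
   <= (Ckk / (N%:R ^+ 2))%:E * norm4_pow4 pif k phi)%E.
Proof.
cbv zeta.
have kk : (1 <= k <= k)%N by rewrite k_ge1 leqnn.
have [Mb0 hMb0] := A2b.
pose Mb := Num.max Mb0 0.
have Mb_ge0 : 0 <= Mb by rewrite le_max lexx orbT.
have hMb : forall x, beta k x <= Mb by move=> x; rewrite le_max hMb0.
have [M30 hM30] := A3.
pose M3 := Num.max M30 0.
have M3_ge0 : 0 <= M3 by rewrite le_max lexx orbT.
have hM3 : forall p, `|phi p| ^+ 4 * beta k p.1 <= M3 by move=> p; rewrite le_max hM30.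
have mbk : measurable_fun setT (fun p : Xh * Y => beta k p.1).
  exact: measurableT_comp (beta_meas k) measurable_fst.
have mbkphi : measurable_fun setT (fun p : Xh * Y => beta k p.1 * phi p).
  exact: measurable_funM.
have [p0 _] : exists p : Xh * Y, True.
  apply: contrapT => hne.
  have e : [set: Xh * Y] = set0.
    by apply/seteqP; split => // p _; apply: hne; exists p.
  have := probability_setT (pip k); rewrite e measure0 => /eqP.
  by rewrite eqe eq_sym oner_eq0.
have Sb_ub : forall x, `|beta k x| <= supnorm (beta k).
  move=> x; rewrite /supnorm; apply: ub_le_sup; last by exists x.
  by exists Mb => _ [y _ <-]; rewrite ger0_norm.
pose Kf := Num.max 1 (Mb ^+ 3 * M3).
have Sf_ub : forall p, `|beta k p.1 * phi p| <= supnorm (fun p => beta k p.1 * phi p).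
  move=> p; rewrite /supnorm; apply: ub_le_sup; last by exists p.
  exists Kf => _ [q _ <-].
  set y := `|beta k q.1 * phi q|.
  have y0 : 0 <= y by apply: normr_ge0.
  have y4 : y ^+ 4 <= Mb ^+ 3 * M3.
    have -> : y ^+ 4 = beta k q.1 ^+ 3 * (`|phi q| ^+ 4 * beta k q.1).
      by rewrite /y normrM (ger0_norm (beta_ge0 k q.1)) exprMn; ring.
    apply: (le_trans (y := beta k q.1 ^+ 3 * M3)).
      by rewrite ler_wpM2l // exprn_ge0.
    rewrite ler_wpM2r // ler_pXn2r // nnegrE //.
  have [y1|y1] := leP y 1; first by rewrite le_max y1.
  rewrite le_max; apply/orP; right.
  by apply: le_trans y4; apply: ler_eXnr => //; apply: ltW.
pose Sb := supnorm (beta k).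
pose Sf := supnorm (fun p : Xh * Y => beta k p.1 * phi p).
have Sb0 : 0 <= Sb by apply: le_trans (Sb_ub p0.1); apply: normr_ge0.
have Sf0 : 0 <= Sf by apply: le_trans (Sf_ub p0); apply: normr_ge0.
pose B := pair (pip k) (fun p => beta k p.1).
have B0 : 0 < B := A1a.
have [g0 gB] := A1b.
have intbk : (\int[pip k]_p (beta k p.1)%:E)%E = B%:E.
  rewrite /B /pair fineK // ge0_fin_numE; last by apply: integral_ge0 => p _; rewrite lee_fin.
  apply: (le_lt_trans (y := (\int[pip k]_p (cst Mb%:E) p)%E)).
    by apply: int_mono => p; rewrite lee_fin.
  by rewrite int_cst_prob ltry.
have bdiv0 : forall p : Xh * Y, 0 <= beta k p.1 / B.
  by move=> p; rewrite divr_ge0 // ltW.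
have mbdiv : measurable_fun setT (fun p : Xh * Y => beta k p.1 / B).
  by apply: measurable_funM => //; exact: measurable_cst.
have pifG : forall A, measurable A ->
    pif k A = (\int[pip k]_(p in A) (beta k p.1 / B)%:E)%E.
  move=> A mA.
  under eq_integral do rewrite EFinM muleC.
  rewrite ge0_integralZl_EFin //; last 3 first.
  - by move=> p _; rewrite lee_fin.
  - by apply/measurable_funTS/measurable_EFinP.
  - by rewrite invr_ge0 ltW.
  rewrite upd_step // intbk muleCA -EFinM mulVf ?mule1 //.
  by rewrite gt_eqF.
have intg : (pip k).-integrable setT (fun p => (beta k p.1 * phi p)%:E).
  apply/integrableP; split.
    exact/measurable_EFinP.
  apply: (le_lt_trans (y := (\int[pip k]_p (cst Sf%:E) p)%E)).
    by apply: int_mono => p //=; rewrite lee_fin.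
  by rewrite int_cst_prob ltry.
have intbkphi : (\int[pip k]_p (beta k p.1 * phi p)%:E)%E
    = (pair (pip k) (fun p => beta k p.1 * phi p))%:E.
  by rewrite /pair fineK //; apply: integrable_fin_num.
have Lid : pair (pif k) phi = pair (pip k) (fun p => beta k p.1 * phi p) / B.
  rewrite {1}/pair (@cov_real _ _ _ (pif k) (pip k) _ bdiv0 mbdiv pifG phi phi_meas).
  have -> : (fun x => (phi x * (beta k x.1 / B))%:E)
      = (fun x => (B^-1)%:E * (beta k x.1 * phi x)%:E)%E.
    by apply/funext => x; rewrite -EFinM; congr EFin; ring.
  by rewrite integralZl // intbkphi /= mulrC.
have memp : forall h : Xh * Y -> R, measurable_fun setT h ->
    measurable_fun setT (fun w => emp_pair (fun i => Xt i w) h).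
  move=> h mh; rewrite /emp_pair; apply: measurable_funM; first exact: measurable_cst.
  by apply: measurable_sum => i; exact: measurableT_comp mh (Xt_meas i).
have mpow : forall (h : Xh * Y -> R) c, measurable_fun setT h ->
    measurable_fun setT (fun w => (`|emp_pair (fun i => Xt i w) h - c| ^+ 4)%:E).
  move=> h c mh; apply/measurable_EFinP; apply: measurable_funX.
  apply: measurableT_comp; first exact: normr_measurable.
  by apply: measurable_funB; [exact: memp | exact: measurable_cst].
have N0 : (N%:R : R) != 0 by rewrite pnatr_eq0 -lt0n.
have empS : forall w, `|emp_pair (fun i => Xt i w) (fun p => beta k p.1 * phi p)| <= Sf.
  move=> w; rewrite /emp_pair normrM ger0_norm ?invr_ge0 ?ler0n //.
  apply: (le_trans (y := (N%:R)^-1 * \sum_(i < N) Sf)).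
    rewrite ler_wpM2l ?invr_ge0 ?ler0n //.
    apply: le_trans (ler_norm_sum _ _ _) _.
    by apply: ler_sum => i _; apply: Sf_ub.
  by rewrite sumr_const card_ord -[Sf *+ N]mulr_natl mulrA mulVf // mul1r.
pose A := pair (pip k) (fun p => beta k p.1 * phi p).
pose K4 := ((gamma k * B)^-1) ^+ 4 * (gamma k + Sf) ^+ 3.
have pw : forall w,
    `|wemp_pair (fun i => Xt i w) (fun p => beta k p.1) phi - pair (pif k) phi| ^+ 4
    <= K4 * gamma k * `|emp_pair (fun i => Xt i w) (fun p => beta k p.1 * phi p) - A| ^+ 4
     + K4 * Sf * `|emp_pair (fun i => Xt i w) (fun p => beta k p.1) - B| ^+ 4.
  move=> w.
  have sb_pos : 0 < \sum_(j < N) beta k (Xt j w).1.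
    have h := accept w; rewrite /emp_pair in h.
    have : 0 < (N%:R)^-1 * \sum_(j < N) beta k (Xt j w).1 by apply: lt_le_trans h.
    by rewrite pmulr_rgt0 // invr_gt0 ltr0n.
  have wid : wemp_pair (fun i => Xt i w) (fun p => beta k p.1) phi
      = emp_pair (fun i => Xt i w) (fun p => beta k p.1 * phi p)
        / emp_pair (fun i => Xt i w) (fun p => beta k p.1).
    rewrite /wemp_pair /emp_pair /=.
    under eq_bigr do rewrite mulrAC.
    rewrite -big_distrl /=.
    by field; apply/andP; split => //; rewrite gt_eqF.
  rewrite wid Lid.
  exact: key_ineq g0 B0 (accept w) (empS w).
pose U := fun w => `|emp_pair (fun i => Xt i w) (fun p => beta k p.1 * phi p) - A| ^+ 4.
pose V := fun w => `|emp_pair (fun i => Xt i w) (fun p => beta k p.1) - B| ^+ 4.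
have U0 : forall w, 0 <= U w by move=> w; rewrite exprn_ge0.
have V0 : forall w, 0 <= V w by move=> w; rewrite exprn_ge0.
have mU : measurable_fun setT (fun w => (U w)%:E) by exact: mpow.
have mV : measurable_fun setT (fun w => (V w)%:E) by exact: mpow.
have K40 : 0 <= K4.
  by rewrite mulr_ge0 // exprn_ge0 // ?invr_ge0 ?mulr_ge0 ?addr_ge0 // ltW.
have c10 : 0 <= K4 * gamma k by rewrite mulr_ge0 // ltW.
have c20 : 0 <= K4 * Sf by rewrite mulr_ge0.
apply: (le_trans (y := (\int[Pr]_w (K4 * gamma k * U w + K4 * Sf * V w)%:E)%E)).
  apply: int_mono => w; first by rewrite lee_fin exprn_ge0.
  by rewrite lee_fin; exact: pw.
have -> : (fun w => (K4 * gamma k * U w + K4 * Sf * V w)%:E)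
    = (fun w => (K4 * gamma k)%:E * (U w)%:E + (K4 * Sf)%:E * (V w)%:E)%E.
  by apply/funext => w; rewrite EFinD !EFinM.
rewrite ge0_integralD //; last 4 first.
- by move=> w _; rewrite mule_ge0 // lee_fin.
- by apply: emeasurable_funM => //; exact: measurable_cst.
- by move=> w _; rewrite mule_ge0 // lee_fin.
- by apply: emeasurable_funM => //; exact: measurable_cst.
rewrite !ge0_integralZl_EFin //; last 2 first.
- by move=> w _; rewrite lee_fin.
- by move=> w _; rewrite lee_fin.
pose c4 := Ct * supnorm (beta k) ^+ 4 / N%:R ^+ 2.
have c40 : 0 <= c4.
  rewrite -lee_fin; apply: le_trans H1.
  by apply: integral_ge0 => w _; rewrite lee_fin exprn_ge0.
pose n := norm4_pow4 pif k phi.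
have n1 : (1 <= n)%E by rewrite /n /norm4_pow4 le_max lexx.
apply: (le_trans (y := ((K4 * gamma k)%:E * (c4%:E * n) + (K4 * Sf)%:E * c4%:E)%E)).
  apply: leeD.
    by apply: lee_wpmul2l; [rewrite lee_fin | exact: H2].
  by apply: lee_wpmul2l; [rewrite lee_fin | exact: H1].
apply: (le_trans (y := ((K4 * gamma k)%:E * (c4%:E * n) + (K4 * Sf)%:E * c4%:E * n)%E)).
  apply: leeD; first by [].
  by apply: lee_pemulr => //; rewrite -EFinM lee_fin mulr_ge0.
rewrite muleA -!EFinM -ge0_muleDl ?lee_fin; try by apply: mulr_ge0.
apply: lee_wpmul2r; first by apply: le_trans n1.
rewrite [X in (_ <= X%:E)%E](_ : _ = K4 * gamma k * c4 + K4 * Sf * c4).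
  by rewrite EFinD.
have Ct4 : Ct * supnorm (beta k) ^+ 4 = (Ct `^ 4%:R^-1 * supnorm (beta k)) ^+ 4.
  have [Sbz|Sbp] := eqVneq Sb 0.
    by rewrite -/Sb Sbz expr0n /= !mulr0 expr0n.
  have Sbp' : 0 < Sb by rewrite lt_def Sbp Sb0.
  have Ct0 : 0 <= Ct.
    move: c40; rewrite /c4 -/Sb pmulr_lge0 ?invr_gt0 ?exprn_gt0 ?ltr0n //.
    by rewrite pmulr_lge0 // exprn_gt0.
  rewrite exprMn -[(Ct `^ _) ^+ 4]powR_mulrn ?powR_ge0 // -powRrM mulVf ?powRr1 //.
rewrite /c4 Ct4 /K4 /Sf /B.
field.
  by rewrite N0 !gt_eqF.
Qed.
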